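(* Let $P$ satisfy (S1)–(S4). If $\bar h\in H$ has support of size at least $4$, then $\bar h$ is a $[\pm,t]$-commutator.
   Context: Conditions on a finite group $P$: (S1) for all $a_1,a_2\in P$ there are $x,y$ with $a_2=x^{-1}a_1^{-1}yxy^{-1}$; (S2) for all $a_1,a_2,a_3$ there are $u,v$ with $a_2=a_3ua_1^{-1}a_3^{-1}vu^{-1}v^{-1}$; (S3) for all $u_1,u_2,u_3,u_4\ne1$ there are $x,y,z$ with $u_4=x^{-1}u_1xy^{-1}u_2yz^{-1}u_3z$; (S4) there are $u_1,u_2,u_3\ne1$ such that there are no $x,y$ with $u_3=x^{-1}u_2^{-1}xy^{-1}u_1^{-1}y$. $H=\bigoplus_{i\in\mathbb Z}H_i$, each $H_i$ a copy of $P$, elements finitely supported sequences $(h_i)_{i\in\mathbb Z}$; the support of $\bar h$ is $\{i:h_i\ne1\}$. $\alpha((h_i)_i)=(h_{i+1})_i$. $\bar h\in H$ is a $[\pm,t]$-commutator if $\bar h=\bar g_1\alpha(\bar g_1^{-1})\alpha(\bar g_2)\bar g_2^{-1}$ or $\bar h=\alpha(\bar g_1)\bar g_1^{-1}\bar g_2\alpha(\bar g_2^{-1})$ for some $\bar g_1,\bar g_2\in H$. *)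

(* Defs.v *)
(* P is modelled as the whole carrier of gT : finGroupType. *)
From mathcomp Require Import all_boot all_algebra all_fingroup.
Set Implicit Arguments. Unset Strict Implicit. Unset Printing Implicit Defensive.
Local Open Scope group_scope.

Definition S1 (gT : finGroupType) : Prop :=
  forall a1 a2 : gT, exists x y : gT, a2 = x^-1 * a1^-1 * y * x * y^-1.
Definition S2 (gT : finGroupType) : Prop :=
  forall a1 a2 a3 : gT, exists u v : gT,
    a2 = a3 * u * a1^-1 * a3^-1 * v * u^-1 * v^-1.
Definition S3 (gT : finGroupType) : Prop :=
  forall u1 u2 u3 u4 : gT, u1 != 1 -> u2 != 1 -> u3 != 1 -> u4 != 1 ->
    exists x y z : gT, u4 = x^-1 * u1 * x * (y^-1 * u2 * y) * (z^-1 * u3 * z).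
Definition S4 (gT : finGroupType) : Prop :=
  exists u1 u2 u3 : gT, [/\ u1 != 1, u2 != 1, u3 != 1 &
    ~ exists x y : gT, u3 = x^-1 * u2^-1 * x * (y^-1 * u1^-1 * y)].

(* Elements of H = (+)_{i in Z} P : finitely supported maps int -> gT,
   with pointwise group operations. *)
Definition fin_supp (gT : finGroupType) (h : int -> gT) : Prop :=
  exists s : seq int, forall i, h i != 1 -> i \in s.

Definition alpha (gT : finGroupType) (h : int -> gT) : int -> gT :=
  fun i => h (i + 1)%R.

Definition supp_size_ge (gT : finGroupType) (h : int -> gT) (n : nat) : Prop :=
  exists s : seq int, [/\ uniq s, (n <= size s)%N & forall i, i \in s -> h i != 1].

Definition pm_t_commutator (gT : finGroupType) (h : int -> gT) : Prop :=
  exists g1 g2 : int -> gT, [/\ fin_supp g1, fin_supp g2 &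
    (forall i, h i = g1 i * (alpha g1 i)^-1 * alpha g2 i * (g2 i)^-1) \/
    (forall i, h i = alpha g1 i * (g1 i)^-1 * g2 i * (alpha g2 i)^-1)].

(* Main.v *)
Require Import Defs.
From mathcomp Require Import all_boot all_order all_algebra all_fingroup.
From mathcomp Require Import zify.
Set Implicit Arguments. Unset Strict Implicit. Unset Printing Implicit Defensive.
Import Order.TTheory.

Section Aux.
Local Open Scope group_scope.
Variable gT : finGroupType.

Lemma noncentral (H1 : S1 gT) (H3 : S3 gT) (u : gT) :
  u != 1 -> exists y, u ^ y != u.
Proof.
move=> u1; case: (boolP [exists y, u ^ y != u]) => [/existsP [y Hy]|Hn];
  first by exists y.
exfalso.
have Hc : forall y, u ^ y = u.
  move=> y; apply/eqP; apply/negPn/negP => H; move/negP: Hn; apply.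
  by apply/existsP; exists y.
have Hv : forall g : gT, g != 1 -> g = u * u * u.
  move=> g g1; have [x [y [z ->]]] := H3 u u u g u1 u1 u1 g1.
  have cj : forall a, a^-1 * u * a = u by move=> a; rewrite -mulgA -conjgE Hc.
  by rewrite !cj.
have Hd : forall g : gT, g = 1 \/ g = u * u * u.
  move=> g; case: (eqVneq g 1) => [->|g1]; [by left| by right; apply: Hv].
have [x [y Hxy]] := H1 1 u.
move: Hxy; rewrite invg1 mulg1.
have cm : forall a b : gT, a * b = b * a.
  move=> a b; case: (Hd a) => ->; case: (Hd b) => ->;
  by rewrite ?mul1g ?mulg1.
rewrite (cm (x^-1) y) -(mulgA y) mulVg mulg1 mulgV => E.
by move: u1; rewrite E eqxx.
Qed.

Definition upd (a : int -> gT) (x : int) (y : gT) :=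
  fun j => if j == x then y else a j.

Lemma prod_upd (w a : int -> gT) x y (r : seq int) : x \notin r ->
  \prod_(j <- r) w j ^ upd a x y j = \prod_(j <- r) w j ^ a j.
Proof.
move=> xr; apply: eq_big_seq => j jr; rewrite /upd.
by case: eqP => // ejx; move: xr; rewrite -ejx jr.
Qed.

Lemma any3 (H1 : S1 gT) (H3 : S3 gT) (w : int -> gT) (r : seq int) :
  uniq r -> all (fun j => w j != 1) r -> (3 <= size r)%N ->
  forall t, t != 1 -> exists a, \prod_(j <- r) w j ^ a j = t.
Proof.
elim: r => [|x r IH] //= /andP[xr ur] /andP[wx wr] sz t t1.
have [sz3|sz2] := leqP 3 (size r).
  have [y Hy] : exists y, w x ^ y != t.
    case: (eqVneq (w x) t) => [E|N]; last by exists 1; rewrite conjg1.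
    by have [y Hy] := noncentral H1 H3 wx; exists y; rewrite -E.
  have t'1 : (w x ^ y)^-1 * t != 1.
    by apply: contra Hy => /eqP E; rewrite -(mulKVg (w x ^ y) t) E mulg1.
  have [a Ha] := IH ur wr sz3 _ t'1.
  exists (upd a x y); rewrite big_cons prod_upd // Ha /upd eqxx.
  by rewrite mulKVg.
case: r IH xr ur wr sz sz2 => [|p [|q [|z r]]] //= _.
rewrite !inE !andbT => /norP[xp xq] pq /andP[wp wq] _ _.
have [x1 [y1 [z1 E]]] := H3 _ _ _ _ wx wp wq t1.
exists (fun j => if j == x then x1 else if j == p then y1 else z1).
rewrite !big_cons big_nil mulg1 eqxx eq_sym (negbTE xp) eqxx eq_sym (negbTE xq).
by rewrite eq_sym (negbTE pq) E !conjgE !mulgA.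
Qed.

Lemma key4 (H1 : S1 gT) (H3 : S3 gT) (w : int -> gT) (r : seq int) :
  uniq r -> all (fun j => w j != 1) r -> (4 <= size r)%N ->
  exists a, \prod_(j <- r) w j ^ a j = 1.
Proof.
case: r => [|x r] //= /andP[xr ur] /andP[wx wr] sz.
have wx' : (w x)^-1 != 1 by rewrite invg_eq1.
have [a Ha] := any3 H1 H3 ur wr sz wx'.
exists (upd a x 1); rewrite big_cons prod_upd // Ha /upd eqxx conjg1.
by rewrite mulgV.
Qed.

Lemma prod_step (F : int -> gT) (r : seq int) (i : int) :
  sorted <=%R r -> uniq r ->
  \prod_(j <- r | (i <= j)%R) F j =
  (if i \in r then F i else 1) * \prod_(j <- r | (i + 1 <= j)%R) F j.
Proof.
elim: r => [|x r IH] /=; first by rewrite !big_nil ?in_nil mulg1.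
move=> Hs /andP[xr ur].
have Hall : all (fun j => (x <= j)%R) r by apply: order_path_min => //; apply: le_trans.
have IH' := IH (path_sorted Hs) ur.
rewrite !big_cons in_cons lezD1.
case: (ltgtP i x) => [ix|xi|ex] /=; last subst i.
- have inr : i \notin r.
    apply/negP => /(allP Hall) xi; by move: (lt_le_trans ix xi); rewrite ltxx.
  by rewrite (negbTE inr) mul1g IH' (negbTE inr) mul1g.
- by [].
- by rewrite IH' (negbTE xr) mul1g.
Qed.

Lemma fs_bound (f : int -> gT) (B : nat) :
  (forall j, f j != 1 -> (absz j <= B)%N) -> fin_supp f.
Proof.
move=> Hb; exists ([seq Posz k | k <- iota 0 B.+1] ++ [seq (- Posz k)%R | k <- iota 0 B.+1]).
move=> j /Hb; rewrite mem_cat; case: j => n Hn; apply/orP.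
  by left; apply/mapP; exists n => //; rewrite mem_iota add0n ltnS.
by right; apply/mapP; exists n.+1; rewrite ?NegzE // mem_iota add0n ltnS.
Qed.

Lemma mem_sum_le (r : seq int) x : x \in r -> uniq r ->
  (absz x <= \sum_(y <- r) absz y)%N.
Proof. by move=> xr ur; rewrite (bigD1_seq x) //= leq_addr. Qed.
End Aux.

Local Open Scope group_scope.

Theorem lemma4p7 (gT : finGroupType) (h : int -> gT) :
  S1 gT -> S2 gT -> S3 gT -> S4 gT ->
  fin_supp h -> supp_size_ge h 4 -> pm_t_commutator h.
Proof.
move=> H1 H2 H3 H4 [s Hs] [s4 [us4 sz4 Hs4]].
pose r0 := [seq j <- sort <=%R (undup s) | h j != 1].
have ur0 : uniq r0 by rewrite filter_uniq // sort_uniq undup_uniq.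
have sr0 : sorted <=%R r0.
  by apply: sorted_filter; [apply: le_trans | apply: sort_sorted; apply: le_total].
have memr0 : forall j, (j \in r0) = (h j != 1).
  move=> j; rewrite mem_filter mem_sort mem_undup.
  by case: (eqVneq (h j) 1) => //= hj; apply: Hs; rewrite hj.
have all0 : all (fun j => (h j)^-1 != 1) r0.
  by apply/allP => j; rewrite memr0 invg_eq1.
have sz : (4 <= size r0)%N.
  by apply: leq_trans sz4 (uniq_leq_size us4 _) => j /Hs4; rewrite memr0.
have [a Ha] := key4 H1 H3 ur0 all0 sz.
pose g1 := fun j => if j \in r0 then a j else 1.
pose d := fun j => h j ^ g1 j.
pose c := fun i => \prod_(j <- r0 | (i <= j)%R) (d j)^-1.
pose g2 := fun j => g1 j * c j.
have full : \prod_(j <- r0) (d j)^-1 = 1.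
  by rewrite -[RHS]Ha; apply: eq_big_seq => j jr; rewrite /d /g1 jr conjVg.
have cstep : forall i, c i = (if i \in r0 then (d i)^-1 else 1) * c (i + 1)%R.
  by move=> i; apply: prod_step.
exists g1, g2; split.
- by exists r0 => j; rewrite /g1; case: ifP => //; rewrite eqxx.
- apply: (@fs_bound _ _ (\sum_(y <- r0) absz y + \sum_(y<-r0) absz y)) => j.
  rewrite /g2 /g1; case: ifP => [jr _|jr].
    exact: leq_trans (mem_sum_le jr ur0) (leq_addr _ _).
  rewrite mul1g => cj.
  have [j1 j1r j1j] : exists2 j1, j1 \in r0 & (j1 < j)%R.
    case: (boolP (all (fun x => (j <= x)%R) r0)) => [Hall | ].
      exfalso; move: cj; rewrite /c big_seq_cond.
      rewrite (eq_bigl (fun x => x \in r0)) -?big_seq ?full ?eqxx //.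
      move=> x /=; case: (boolP (x \in r0)) => // xr.
      by rewrite (allP Hall x xr).
    by rewrite -has_predC => /hasP [x xr /= nx]; exists x => //; rewrite ltNge.
  have [j2 j2r j2j] : exists2 j2, j2 \in r0 & (j <= j2)%R.
    case: (boolP (has (fun x => (j <= x)%R) r0)) => [/hasP [x ? ?]|nh].
      by exists x.
    by move: cj; rewrite /c big_hasC // eqxx.
  have := mem_sum_le j1r ur0; have := mem_sum_le j2r ur0; lia.
- left => i; rewrite /alpha /g2 (cstep i) !invMg !mulgA mulgKV mulgK.
  case: (boolP (i \in r0)) => ir.
    by rewrite !invMg !invgK !mulgA mulgV mul1g mulgK.
  rewrite invg1 mulg1 mulgV.
  by move: ir; rewrite memr0 negbK => /eqP.
Qed.
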